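(* Let $1\le l\le g$. The power series $Q^l(x_2,\dots,x_{n-1})$ has coefficients in $\mathbb Z_p^n$ and converges uniformly on $D_{0,1}^{n-2}=(p\mathbb Z_p)^{n-2}$, and the sequence of polynomial functions $Q^{l,s}(x_2,\dots,x_{n-1})$, $s=1,2,\dots$, converges uniformly on $D_{0,1}^{n-2}$ to $Q^l(x_2,\dots,x_{n-1})$.
   Context: Let $p$ be an odd prime, $g\ge1$, $n=2g+1$, $p>n$. $\mathbb Z_p$, $\mathbb Q_p$, $|\cdot|_p$ as usual; $D_{0,1}=\{t\in\mathbb Z_p:|t|_p<1\}$; uniform convergence on $S$ means convergence in $\sup_{S}|\cdot|_p$ (coordinatewise). Binomials $\binom{y}{k}=y(y-1)\cdots(y-k+1)/k!$. Fix $1\le l\le g$. For $a=(a_1,\dots,a_{n-1})$ write $X(a)=\prod_{i=2}^{n-2l}x_i^{a_{i-1}}\prod_{i=n-2l+1}^{n-1}x_i^{a_i}$. For a parameter $\mu$ define $Q^{l}[\mu]=(Q_1,\dots,Q_n)$ by: for $1\le j\le n-2l-1$: $Q_j=x_{j+1}\sum\binom{\mu-1}{a_j}\prod_{i\ne j}\binom{\mu}{a_i}X(a)$ over $a$ with $a_1+\dots+a_{n-2l}=a_{n-2l+1}+\dots+a_{n-1}+l-1$; for $j=n-2l$: $Q_j=\sum\binom{\mu-1}{a_j}\prod_{i\ne j}\binom{\mu}{a_i}X(a)$ with the same condition ($l-1$); for $n-2l<j\le n-1$: $Q_j=\sum\binom{\mu-1}{a_j}\prod_{i\ne j}\binom{\mu}{a_i}X(a)$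 over $a$ with $a_1+\dots+a_{n-2l}=a_{n-2l+1}+\dots+a_{n-1}+l$; $Q_n=\sum\prod_{i=1}^{n-1}\binom{\mu}{a_i}X(a)$ over $a$ with $a_1+\dots+a_{n-2l}=a_{n-2l+1}+\dots+a_{n-1}+l$. Here $\prod_{i\ne j}$ is over $i\in\{1,\dots,n-1\}\setminus\{j\}$. Then $Q^l$ is the formal power series $Q^l[-\tfrac12]$ in $x_2,\dots,x_{n-1}$ (sum over all $a\in\mathbb Z_{\ge0}^{n-1}$), and $Q^{l,s}$ is the polynomial $Q^l[\tfrac{p^s-1}2]$ (sum over $a$ with $0\le a_i\le\frac{p^s-1}2$). *)

(* Defs.v *)
(* Z_p is modelled concretely as the completion of Z_(p):
   an element of Z_p is a sequence (x_k) of p-integral rationals with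
   x_m = x_k (mod p^k) for m >= k; two elements are congruent modulo p^k
   (i.e. |x - y|_p <= p^-k) iff x_k = y_k (mod p^k). *)
From mathcomp Require Import all_boot all_order all_algebra.
Set Implicit Arguments. Unset Strict Implicit. Unset Printing Implicit Defensive.
Import Order.TTheory GRing.Theory Num.Theory.
Local Open Scope ring_scope.

Definition pint (p : nat) (r : rat) : bool := ~~ (p %| `|denq r|)%N.

Definition pdvd (p k : nat) (r : rat) : bool := pint p (r / (p%:R ^+ k)).

Definition is_zp (p : nat) (x : nat -> rat) : Prop :=
  forall k, pint p (x k) /\ forall m, (k <= m)%N -> pdvd p k (x m - x k).

Definition zp_eqmod (p k : nat) (x y : nat -> rat) : bool := pdvd p k (x k - y k).

(* x (indexed by variables i, each x i an element of Z_p) lies in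
   D_{0,1}^{n-2}: x_i in pZ_p for 2 <= i <= n-1 *)
Definition in_D (p n : nat) (x : nat -> nat -> rat) : Prop :=
  forall i, (2 <= i <= n.-1)%N -> is_zp p (x i) /\ zp_eqmod p 1 (x i) (fun _ => 0).

Definition binr (y : rat) (k : nat) : rat :=
  (\prod_(i < k) (y - i%:R)) / (k`!)%:R.

Definition nn (g : nat) : nat := (2 * g).+1.

Definition Qcond (g l j : nat) (a : nat -> nat) : bool :=
  let n := nn g in
  (\sum_(1 <= i < (n - 2 * l).+1) a i ==
   \sum_((n - 2 * l).+1 <= i < n) a i + (if (j <= n - 2 * l)%N then l.-1 else l))%N.

Definition Qcoef (g : nat) (mu : rat) (j : nat) (a : nat -> nat) : rat :=
  let n := nn g in
  if (j < n)%N then binr (mu - 1) (a j) * \prod_(1 <= i < n | i != j) binr mu (a i)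
  else \prod_(1 <= i < n) binr mu (a i).

Definition Qmon (g l j : nat) (a : nat -> nat) (y : nat -> rat) : rat :=
  let n := nn g in
  (if (j < n - 2 * l)%N then y j.+1 else 1) *
  (\prod_(2 <= i < (n - 2 * l).+1) y i ^+ a i.-1) *
  (\prod_((n - 2 * l).+1 <= i < n) y i ^+ a i).

(* a : {ffun 'I_(n-1) -> 'I_(N+1)} read as (a_1,...,a_{n-1}), a_i = a (i-1) *)
Definition aget (m N : nat) (a : {ffun 'I_m -> 'I_N.+1}) (i : nat) : nat :=
  if i is i'.+1 then
    (if @insub nat (fun t => (t < m)%N) 'I_m i' is Some t then val (a t) else 0%N)
  else 0%N.

Definition Qsum (g l : nat) (mu : rat) (N j : nat) (y : nat -> rat) : rat :=
  \sum_(a : {ffun 'I_(2 * g) -> 'I_N.+1} | Qcond g l j (aget a))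
     Qcoef g mu j (aget a) * Qmon g l j (aget a) y.

Definition Qeval (g l : nat) (mu : rat) (N j : nat) (x : nat -> nat -> rat) : nat -> rat :=
  fun k => Qsum g l mu N j (fun i => x i k).

Definition unif_conv (p n : nat) (f : nat -> nat -> (nat -> nat -> rat) -> nat -> rat)
  (F : nat -> (nat -> nat -> rat) -> nat -> rat) : Prop :=
  forall k, exists S, forall s, (S <= s)%N -> forall x, in_D p n x ->
    forall j, (1 <= j <= n)%N -> zp_eqmod p k (f s j x) (F j x).

(* Main.v *)
Require Import Defs.
From mathcomp Require Import all_boot all_order all_algebra.
From mathcomp Require Import zify ring.
From Stdlib Require Import FunctionalExtensionality.
Import Order.TTheory GRing.Theory Num.Theory.
Local Open Scope ring_scope.

Definition pI (p : nat) (r : rat) := exists (a : int) (b : nat),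
  ~~ (p %| b)%N /\ r = a%:~R / b%:R.

Lemma denq_dvd (a : int) (b : nat) : (0 < b)%N ->
  (`|denq (a%:~R / b%:R : rat)| %| b)%N.
Proof.
move=> b0; set r := (a%:~R / b%:R : rat).
have hb : (b%:R : rat) != 0 by rewrite pnatr_eq0 -lt0n.
have e : numq r * b%:Z = a * denq r.
  apply: (@intr_inj rat); rewrite !rmorphM /= numqE /r.
  rewrite -[((b%:Z)%:~R : rat)]/(b%:R : rat).
  by field.
have e2 : (`|numq r| * b = `|a| * `|denq r|)%N.
  by rewrite -[b in LHS]/(`|b%:Z|%N) -!abszM e.
have : (`|denq r| %| `|numq r| * b)%N by rewrite e2 dvdn_mull.
by rewrite Gauss_dvdr // coprime_sym coprime_num_den.
Qed.

Lemma pintP p r : pint p r <-> pI p r.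
Proof.
split.
- move=> h; exists (numq r), `|denq r|%N; split => //.
  by rewrite natr_absz gtr0_norm ?denq_gt0 // divq_num_den.
- move=> [a [b [hb ->]]].
  have b0 : (0 < b)%N by rewrite lt0n; apply: contraNneq hb => ->; rewrite dvdn0.
  apply/negP => hd; move/negP: hb; apply.
  apply: (dvdn_trans hd); exact: denq_dvd.
Qed.

Lemma nd_pos p b : ~~ (p %| b)%N -> (b%:R : rat) != 0.
Proof. by move=> h; rewrite pnatr_eq0; apply: contraNneq h => ->; rewrite dvdn0. Qed.

Lemma pI_int p (z : int) : prime p -> pI p z%:~R.
Proof.
move=> pr; exists z, 1%N; split; last by rewrite divr1.
by rewrite dvdn1; apply: contraL (prime_gt1 pr) => /eqP ->.
Qed.

Lemma pI_nat p (m : nat) : prime p -> pI p m%:R.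
Proof. by move=> pr; have := pI_int p (m%:Z) pr. Qed.

Lemma pI0 p : prime p -> pI p 0.
Proof. by move=> pr; have := pI_nat p 0 pr. Qed.
Lemma pI1 p : prime p -> pI p 1.
Proof. by move=> pr; have := pI_nat p 1 pr. Qed.

Lemma pI_add p x y : prime p -> pI p x -> pI p y -> pI p (x + y).
Proof.
move=> pr [a [b [hb ->]]] [c [d [hd ->]]].
exists (a * d%:Z + c * b%:Z), (b * d)%N; split.
  by rewrite Euclid_dvdM // negb_or hb hd.
have := nd_pos _ _ hb; have := nd_pos _ _ hd => h1 h2.
rewrite natrM rmorphD !rmorphM /=.
rewrite -[((b%:Z)%:~R : rat)]/(b%:R : rat) -[((d%:Z)%:~R : rat)]/(d%:R : rat).
by field; rewrite h1 h2.
Qed.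

Lemma pI_mul p x y : prime p -> pI p x -> pI p y -> pI p (x * y).
Proof.
move=> pr [a [b [hb ->]]] [c [d [hd ->]]].
exists (a * c), (b * d)%N; split.
  by rewrite Euclid_dvdM // negb_or hb hd.
have := nd_pos _ _ hb; have := nd_pos _ _ hd => h1 h2.
rewrite natrM rmorphM /=.
by field; rewrite h1 h2.
Qed.

Lemma pI_opp p x : prime p -> pI p x -> pI p (- x).
Proof.
move=> pr [a [b [hb ->]]]; exists (- a), b; split => //.
by rewrite rmorphN mulNr.
Qed.

Lemma pI_sub p x y : prime p -> pI p x -> pI p y -> pI p (x - y).
Proof. by move=> pr hx hy; apply: pI_add => //; apply: pI_opp. Qed.

Lemma pI_expn p x e : prime p -> pI p x -> pI p (x ^+ e).
Proof.
move=> pr hx; elim: e => [|e ih]; first by rewrite expr0; apply: pI1.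
by rewrite exprS; apply: pI_mul.
Qed.

Lemma pI_sum p (I : Type) (r : seq I) (P : pred I) (F : I -> rat) : prime p ->
  (forall i, P i -> pI p (F i)) -> pI p (\sum_(i <- r | P i) F i).
Proof.
move=> pr h; apply: big_ind => //; first exact: pI0.
by move=> u v; apply: pI_add.
Qed.

Lemma pI_prod p (I : Type) (r : seq I) (P : pred I) (F : I -> rat) : prime p ->
  (forall i, P i -> pI p (F i)) -> pI p (\prod_(i <- r | P i) F i).
Proof.
move=> pr h; apply: big_ind => //; first exact: pI1.
by move=> u v; apply: pI_mul.
Qed.

Lemma pI_divn p x (c : nat) : prime p -> pI p x -> ~~ (p %| c)%N -> pI p (x / c%:R).
Proof.
move=> pr [a [b [hb ->]]] hc; exists a, (b * c)%N; split.
  by rewrite Euclid_dvdM // negb_or hb hc.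
have := nd_pos _ _ hb; have := nd_pos _ _ hc => h1 h2.
rewrite natrM; by field; rewrite h1 h2.
Qed.

Lemma pI_half p : prime p -> odd p -> pI p (1 / 2%:R).
Proof.
move=> pr po; exists 1, 2%N; split => //.
apply/negP => h; have := dvdn_leq (isT : (0 < 2)%N) h.
have := prime_gt1 pr; move: po; case: p {pr h} => [|[|[|q]]] //.
Qed.

Definition Dk p k (r : rat) := pI p (r / (p%:R) ^+ k).

Lemma pdvdP p k r : pdvd p k r <-> Dk p k r.
Proof. exact: pintP. Qed.

Lemma pP0 p : prime p -> (p%:R : rat) != 0.
Proof. by move=> pr; rewrite pnatr_eq0 -lt0n prime_gt0. Qed.

Lemma Dk0 p r : Dk p 0 r <-> pI p r.
Proof. by rewrite /Dk expr0 divr1. Qed.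

Lemma Dk_add p k x y : prime p -> Dk p k x -> Dk p k y -> Dk p k (x + y).
Proof. by move=> pr hx hy; rewrite /Dk mulrDl; apply: pI_add. Qed.

Lemma Dk_opp p k x : prime p -> Dk p k x -> Dk p k (- x).
Proof. by move=> pr hx; rewrite /Dk mulNr; apply: pI_opp. Qed.

Lemma Dk_sub p k x y : prime p -> Dk p k x -> Dk p k y -> Dk p k (x - y).
Proof. by move=> pr hx hy; apply: Dk_add => //; apply: Dk_opp. Qed.

Lemma Dk_zero p k : prime p -> Dk p k 0.
Proof. by move=> pr; rewrite /Dk mul0r; apply: pI0. Qed.

Lemma Dk_mulr p k x y : prime p -> Dk p k x -> pI p y -> Dk p k (x * y).
Proof.
move=> pr hx hy; rewrite /Dk mulrAC; exact: pI_mul.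
Qed.

Lemma Dk_mul p k m x y : prime p -> Dk p k x -> Dk p m y -> Dk p (k + m) (x * y).
Proof.
move=> pr hx hy; rewrite /Dk.
have -> : x * y / p%:R ^+ (k + m) = (x / p%:R ^+ k) * (y / p%:R ^+ m).
  rewrite exprD; have h := pP0 p pr; field.
  by rewrite !expf_neq0.
exact: pI_mul.
Qed.

Lemma Dk_le p k m x : prime p -> (m <= k)%N -> Dk p k x -> Dk p m x.
Proof.
move=> pr hmk hx; rewrite /Dk.
have -> : x / p%:R ^+ m = (x / p%:R ^+ k) * (p%:R ^+ (k - m)).
  rewrite -{1}(subnK hmk) exprD; have h := pP0 p pr; field.
  by rewrite !expf_neq0.
by apply: pI_mul => //; apply: pI_expn => //; apply: pI_nat.
Qed.

Lemma Dk_pI p k x : prime p -> Dk p k x -> pI p x.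
Proof. by move=> pr h; apply/Dk0; apply: Dk_le h. Qed.

Lemma Dk_pow p k c : prime p -> pI p c -> Dk p k (p%:R ^+ k * c).
Proof.
move=> pr hc; rewrite /Dk [_ * c]mulrC mulfK //.
by rewrite expf_neq0 // pP0.
Qed.

Lemma Dk_sum p k (I : Type) (r : seq I) (P : pred I) (F : I -> rat) : prime p ->
  (forall i, P i -> Dk p k (F i)) -> Dk p k (\sum_(i <- r | P i) F i).
Proof.
move=> pr h; apply: big_ind => //; first exact: Dk_zero.
by move=> u v; apply: Dk_add.
Qed.

Lemma Dk_prod p (I : Type) (r : seq I) (P : pred I) (e : I -> nat) (F : I -> rat) :
  prime p -> (forall i, P i -> Dk p (e i) (F i)) ->
  Dk p (\sum_(i <- r | P i) e i) (\prod_(i <- r | P i) F i).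
Proof.
move=> pr h; elim: r => [|i r ih]; first by rewrite !big_nil; apply/Dk0; apply: pI1.
rewrite !big_cons; case Pi: (P i) => //.
by apply: Dk_mul => //; apply: h.
Qed.

Lemma Dk_exp p e y : prime p -> Dk p 1 y -> Dk p e (y ^+ e).
Proof.
move=> pr hy; elim: e => [|e ih]; first by apply/Dk0; rewrite expr0; apply: pI1.
by rewrite exprS -add1n; apply: Dk_mul.
Qed.

Definition Rk p k (u v : rat) := [/\ pI p u, pI p v & Dk p k (u - v)].

Lemma Rk_refl p k u : prime p -> pI p u -> Rk p k u u.
Proof. by move=> pr h; split => //; rewrite subrr; apply: Dk_zero. Qed.

Lemma Rk_mul p k u u' v v' : prime p -> Rk p k u v -> Rk p k u' v' -> Rk p k (u * u') (v * v').
Proof.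
move=> pr [h1 h2 h3] [h4 h5 h6]; split; try exact: pI_mul.
have -> : u * u' - v * v' = (u - v) * u' + v * (u' - v') by ring.
apply: Dk_add => //; first exact: Dk_mulr.
by rewrite mulrC; apply: Dk_mulr.
Qed.

Lemma Rk_prod p k (I : Type) (r : seq I) (P : pred I) (F G : I -> rat) : prime p ->
  (forall i, P i -> Rk p k (F i) (G i)) ->
  Rk p k (\prod_(i <- r | P i) F i) (\prod_(i <- r | P i) G i).
Proof.
move=> pr h; apply: (big_ind2 (Rk p k)) => //; first by apply: Rk_refl => //; apply: pI1.
by move=> ? ? ? ?; apply: Rk_mul.
Qed.

Lemma Rk_exp p k u v e : prime p -> Rk p k u v -> Rk p k (u ^+ e) (v ^+ e).
Proof.
move=> pr h; elim: e => [|e ih]; first by rewrite !expr0; apply: Rk_refl => //; apply: pI1.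
by rewrite !exprS; apply: Rk_mul.
Qed.

Lemma fact_neq0 a : ((a`!)%:R : rat) != 0.
Proof. by rewrite pnatr_eq0 -lt0n fact_gt0. Qed.

Lemma binrS y a : binr y a.+1 = binr y a * (y - a%:R) / (a.+1)%:R.
Proof.
rewrite /binr big_ord_recr /= factS natrM.
have h1 := fact_neq0 a; have h2 : ((a.+1)%:R : rat) != 0 by rewrite pnatr_eq0.
by field; rewrite h1 andbT addrC natr1.
Qed.

Lemma binr_nat m a : binr m%:R a = ('C(m, a))%:R.
Proof.
elim: a => [|a ih]; first by rewrite /binr big_ord0 bin0 fact0 divr1.
rewrite binrS ih.
have h2 : ((a.+1)%:R : rat) != 0 by rewrite pnatr_eq0.
have e := mul_bin_left m a.
case: (leqP a m) => ham.
  by apply: (mulIf h2); rewrite mulfVK // -natrB // -!natrM mulnC -e mulnC.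
by rewrite (bin_small ham) bin_small ?mulr0n ?mul0r // ltnW.
Qed.

Lemma p_ge3 p : prime p -> odd p -> (3 <= p)%N.
Proof. by move=> pr po; have := prime_gt1 pr; case: p pr po => [|[|[|q]]]. Qed.

Lemma binr_cong p y z a s : prime p -> pI p y -> pI p z -> Dk p s (y - z) ->
  (logn p a`! <= s)%N -> Dk p (s - logn p a`!) (binr y a - binr z a).
Proof.
move=> pr hy hz hs hv.
have R : Rk p s (\prod_(i < a) (y - i%:R)) (\prod_(i < a) (z - i%:R)).
  apply: Rk_prod => // i _; split; try by apply: pI_sub => //; apply: pI_nat.
  by have -> : y - i%:R - (z - i%:R) = y - z by ring.
case: R => _ _ hD.
move: hD; set D := _ - _ => hD.
have [c hc ha] := pfactor_coprime pr (fact_gt0 a).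
set v := logn p a`! in hv ha *.
rewrite /Dk.
have -> : (binr y a - binr z a) / p%:R ^+ (s - v) = (D / p%:R ^+ s) / c%:R.
  rewrite /binr /D ha natrM natrX.
  have hp := pP0 p pr.
  have hc0 : (c%:R : rat) != 0.
    by rewrite pnatr_eq0; apply: contraTneq hc => ->; rewrite /coprime gcdn0; have := prime_gt1 pr; case: (p) => [|[|]].
  rewrite -{2}(subnK hv) exprD.
  by field; rewrite hc0 !expf_neq0.
apply: pI_divn => //.
by rewrite -prime_coprime.
Qed.

Definition mus (p s : nat) : rat := ((p ^ s).-1./2)%:R.
Notation mh := (- (1 / 2%:R) : rat).

Lemma mus_eq p s : odd p -> 2%:R * mus p s = p%:R ^+ s - 1.
Proof.
move=> po; rewrite /mus.
have ho : odd (p ^ s) by rewrite oddX po orbT.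
have h0 : (0 < p ^ s)%N by rewrite expn_gt0; case: (p) po.
have he : ~~ odd (p ^ s).-1 by move: ho; rewrite -{1}(prednK h0).
by rewrite -natrM mul2n even_halfK // -natrX -{2}(prednK h0) -addn1 natrD addrK.
Qed.

Lemma mus_diff p s t : odd p -> mus p s - t - (mh - t) = p%:R ^+ s * (1 / 2%:R).
Proof.
move=> po; have e := mus_eq p s po.
have -> : mus p s = (p%:R ^+ s - 1) / 2%:R by rewrite -e; field.
by field.
Qed.

Lemma mus_Dk p s t : prime p -> odd p -> Dk p s (mus p s - t - (mh - t)).
Proof.
by move=> pr po; rewrite mus_diff //; apply: Dk_pow => //; apply: pI_half.
Qed.

Lemma s_le_N p s : (3 <= p)%N -> (s <= (p ^ s).-1./2)%N.
Proof.
move=> hp.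
have h : (s.*2 < p ^ s)%N.
  elim: s => [|s ih]; first by rewrite expn_gt0; case: p hp.
  rewrite expnS doubleS; nia.
rewrite -{1}(doubleK s); apply: half_leq; lia.
Qed.

Lemma mus1 p s : (3 <= p)%N -> (1 <= s)%N -> mus p s - 1 = (((p ^ s).-1./2).-1)%:R.
Proof.
move=> hp hs; have h := s_le_N p s hp.
have h0 : (0 < (p ^ s).-1./2)%N by apply: leq_trans h.
by rewrite /mus -{1}(prednK h0) -addn1 natrD addrK.
Qed.

Lemma binr_mus_int p s c : (3 <= p)%N -> (1 <= s)%N -> prime p ->
  pI p (binr (mus p s) c) /\ pI p (binr (mus p s - 1) c).
Proof.
move=> hp hs pr; split; first by rewrite /mus binr_nat; apply: pI_nat.
by rewrite mus1 // binr_nat; apply: pI_nat.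
Qed.

Lemma binr_mh_int p c : prime p -> odd p ->
  pI p (binr mh c) /\ pI p (binr (mh - 1) c).
Proof.
move=> pr po; have hp := p_ge3 p pr po.
set s := (logn p c`!).+1.
have [i1 i2] := binr_mus_int p s c hp (isT : (1 <= s)%N) pr.
have hv : (logn p c`! <= s)%N by rewrite leqnSn.
have hm : pI p (mus p s) by apply: pI_nat.
have hh : pI p mh by apply: pI_opp => //; apply: pI_half.
have key : forall t, pI p (binr (mus p s - t) c) -> pI p t -> pI p (binr (mh - t) c).
  move=> t h ht.
  have hD := binr_cong p _ _ c s pr (pI_sub p _ _ pr hm ht) (pI_sub p _ _ pr hh ht) (mus_Dk p s t pr po) hv.
  have -> : binr (mh - t) c = binr (mus p s - t) c - (binr (mus p s - t) c - binr (mh - t) c) by ring.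
  by apply: pI_sub => //; apply: Dk_pI hD.
split.
  by have := key 0; rewrite !subr0; apply => //; apply: pI0.
by apply: key => //; apply: pI1.
Qed.

Lemma pI_prod_nat p m n (F : nat -> rat) : prime p ->
  (forall i, (m <= i < n)%N -> pI p (F i)) -> pI p (\prod_(m <= i < n) F i).
Proof.
move=> pr h; rewrite big_nat_cond; apply: pI_prod => // i /andP [hi _]; exact: h.
Qed.

Lemma Rk_prod_nat p k m n (F G : nat -> rat) : prime p ->
  (forall i, (m <= i < n)%N -> Rk p k (F i) (G i)) ->
  Rk p k (\prod_(m <= i < n) F i) (\prod_(m <= i < n) G i).
Proof.
move=> pr h; rewrite big_nat_cond [X in Rk _ _ _ X]big_nat_cond.
apply: Rk_prod => // i /andP [hi _]; exact: h.
Qed.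

Lemma Dk_prod_nat p m n (e : nat -> nat) (F : nat -> rat) : prime p ->
  (forall i, (m <= i < n)%N -> Dk p (e i) (F i)) ->
  Dk p (\sum_(m <= i < n) e i) (\prod_(m <= i < n) F i).
Proof.
move=> pr h; rewrite big_nat_cond [X in Dk _ _ X]big_nat_cond.
apply: Dk_prod => // i /andP [hi _]; exact: h.
Qed.

Lemma Qcoef_int p g mu j a : prime p ->
  (forall c, pI p (binr mu c) /\ pI p (binr (mu - 1) c)) -> pI p (Qcoef g mu j a).
Proof.
move=> pr h; rewrite /Qcoef; case: ifP => _.
  apply: pI_mul => //; first by case: (h (a j)).
  by apply: pI_prod => // i _; case: (h (a i)).
by apply: pI_prod => // i _; case: (h (a i)).
Qed.

Lemma Qcoef_cong p k g mu nu j a B : prime p ->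
  (forall c, (c <= B)%N -> Rk p k (binr mu c) (binr nu c) /\ Rk p k (binr (mu - 1) c) (binr (nu - 1) c)) ->
  (forall i, (a i <= B)%N) -> Rk p k (Qcoef g mu j a) (Qcoef g nu j a).
Proof.
move=> pr h ha; rewrite /Qcoef; case: ifP => _.
  apply: Rk_mul => //; first by case: (h (a j)).
  by apply: Rk_prod => // i _; case: (h (a i)).
by apply: Rk_prod => // i _; case: (h (a i)).
Qed.

Definition Eg g l (a : nat -> nat) : nat :=
  (\sum_(2 <= i < (nn g - 2 * l).+1) a i.-1 + \sum_((nn g - 2 * l).+1 <= i < nn g) a i)%N.

Lemma Qmon_int p g l j a y : prime p -> (1 <= l <= g)%N -> (1 <= j)%N ->
  (forall i, (2 <= i <= (nn g).-1)%N -> pI p (y i)) -> pI p (Qmon g l j a y).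
Proof.
move=> pr hl hj hy; rewrite /Qmon.
apply: pI_mul => //; [apply: pI_mul => //|].
- case: ifP => h; last exact: pI1.
  apply: hy; rewrite /nn in h *; lia.
- apply: pI_prod_nat => // i hi; apply: pI_expn => //; apply: hy; rewrite /nn in hi *; lia.
- apply: pI_prod_nat => // i hi; apply: pI_expn => //; apply: hy; rewrite /nn in hi *; lia.
Qed.

Lemma Qmon_Dk p g l j a y : prime p -> (1 <= l <= g)%N -> (1 <= j)%N ->
  (forall i, (2 <= i <= (nn g).-1)%N -> Dk p 1 (y i)) -> Dk p (Eg g l a) (Qmon g l j a y).
Proof.
move=> pr hl hj hy; rewrite /Qmon /Eg -[X in Dk _ X _]add0n addnA.
apply: Dk_mul => //; [apply: Dk_mul => //|].
- apply/Dk0; case: ifP => h; last exact: pI1.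
  apply: (Dk_pI p 1) => //; apply: hy; rewrite /nn in h *; lia.
- apply: Dk_prod_nat => // i hi; apply: Dk_exp => //; apply: hy; rewrite /nn in hi *; lia.
- apply: Dk_prod_nat => // i hi; apply: Dk_exp => //; apply: hy; rewrite /nn in hi *; lia.
Qed.

Lemma Qmon_cong p k g l j a y z : prime p -> (1 <= l <= g)%N -> (1 <= j)%N ->
  (forall i, (2 <= i <= (nn g).-1)%N -> Rk p k (y i) (z i)) ->
  Rk p k (Qmon g l j a y) (Qmon g l j a z).
Proof.
move=> pr hl hj hy; rewrite /Qmon.
apply: Rk_mul => //; [apply: Rk_mul => //|].
- case: ifP => h; last by apply: Rk_refl => //; exact: pI1.
  apply: hy; rewrite /nn in h *; lia.
- apply: Rk_prod_nat => // i hi; apply: Rk_exp => //; apply: hy; rewrite /nn in hi *; lia.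
- apply: Rk_prod_nat => // i hi; apply: Rk_exp => //; apply: hy; rewrite /nn in hi *; lia.
Qed.

Lemma term_le (a : nat -> nat) m n i : (m <= i < n)%N -> (a i <= \sum_(m <= k < n) a k)%N.
Proof.
move=> hi; rewrite (bigD1_seq i) /= ?leq_addr //; last exact: iota_uniq.
by rewrite mem_iota; lia.
Qed.

Lemma Qcond_bound g l j a : (1 <= l <= g)%N -> Qcond g l j a ->
  forall i, (1 <= i <= (nn g).-1)%N -> (a i <= Eg g l a + l)%N.
Proof.
move=> hl /eqP hc i hi.
set m := (nn g - 2 * l)%N in hc *.
have hm : (1 <= m)%N by rewrite /m /nn; lia.
have e1 : (\sum_(2 <= k < m.+1) a k.-1 = \sum_(1 <= k < m) a k)%N.
  by rewrite (big_add1 _ _ 1).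
have eL : (\sum_(1 <= k < m.+1) a k = \sum_(1 <= k < m) a k + a m)%N.
  by rewrite big_nat_recr.
have hc' : (\sum_(1 <= k < m) a k + a m = \sum_(m.+1 <= k < nn g) a k
            + (if (j <= m)%N then l.-1 else l))%N by rewrite -eL.
rewrite /Eg -/m e1.
have hcl : ((if (j <= m)%N then l.-1 else l) <= l)%N by case: ifP; lia.
case: (ltngtP i m) => him.
- have := term_le a 1 m i; lia.
- have := term_le a m.+1 (nn g) i; rewrite /nn in hi *; lia.
- subst i; lia.
Qed.

Lemma aget_eq m N M (a : {ffun 'I_m -> 'I_N.+1}) (b : {ffun 'I_m -> 'I_M.+1}) :
  (forall t, val (a t) = val (b t)) -> aget a = aget b.
Proof.
move=> h; apply: functional_extensionality => -[|i] //=.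
by case: insubP => // t _ _; apply: h.
Qed.

Lemma aget_ord m N (a : {ffun 'I_m -> 'I_N.+1}) (t : 'I_m) : aget a (val t).+1 = val (a t).
Proof.
rewrite /= (insubT (fun x => (x < m)%N) (ltn_ord t)) /=.
by congr (val (a _)); apply: val_inj.
Qed.

Lemma aget_le m N (a : {ffun 'I_m -> 'I_N.+1}) i : (aget a i <= N)%N.
Proof.
case: i => [|i] //=; case: insubP => // t _ _; by rewrite -ltnS.
Qed.

Lemma reindex_ffun m N M (P : (nat -> nat) -> bool) (F : (nat -> nat) -> rat) : (N <= M)%N ->
  \sum_(a : {ffun 'I_m -> 'I_N.+1} | P (aget a)) F (aget a) =
  \sum_(b : {ffun 'I_m -> 'I_M.+1} | P (aget b) && [forall t, (val (b t) <= N)%N]) F (aget b).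
Proof.
move=> hNM.
pose h := fun (b : {ffun 'I_m -> 'I_M.+1}) => [ffun t => (inord (val (b t)) : 'I_N.+1)].
pose h' := fun (a : {ffun 'I_m -> 'I_N.+1}) => [ffun t => (inord (val (a t)) : 'I_M.+1)].
have hh : forall a, h (h' a) = a.
  move=> a; apply/ffunP => t; rewrite !ffunE; apply: val_inj => /=.
  rewrite !inordK //; have := ltn_ord (a t); lia.
rewrite (reindex_onto h h') //.
have key : forall b, (h' (h b) == b) = [forall t, (val (b t) <= N)%N].
  move=> b; apply/idP/idP.
    move/eqP => e; apply/forallP => t; rewrite -e ffunE /= inordK.
      by rewrite ffunE /= -ltnS ltn_ord.
    rewrite ffunE /=; apply: leq_trans (ltn_ord _) _; by rewrite ltnS.
  move/forallP => H; apply/eqP/ffunP => t; rewrite !ffunE; apply: val_inj => /=.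
  have e1 : (inord (b t) : 'I_N.+1) = b t :> nat by rewrite inordK // ltnS H.
  rewrite inordK ?e1 //; exact: ltn_ord.
have ag : forall b : {ffun 'I_m -> 'I_M.+1}, [forall t, (val (b t) <= N)%N] -> aget (h b) = aget b.
  by move=> b Hb; apply: aget_eq => t; move/forallP: Hb => Hb; rewrite ffunE /= inordK // ltnS Hb.
transitivity (\sum_(j : {ffun 'I_m -> 'I_M.+1} | P (aget (h j)) && (h' (h j) == j)) F (aget (h j))); first by [].
apply: eq_big => b.
  rewrite key; case: (boolP [forall t, _]) => H; last by rewrite !andbF.
  by rewrite ag.
by move=> /andP [_]; rewrite key => H; rewrite ag.
Qed.

Definition Qterm g l mu j y (a : nat -> nat) := Qcoef g mu j a * Qmon g l j a y.

Lemma Qsum_split g l mu N M j y : (N <= M)%N ->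
  Qsum g l mu M j y - Qsum g l mu N j y =
  \sum_(b : {ffun 'I_(2 * g) -> 'I_M.+1} | Qcond g l j (aget b) && ~~ [forall t, (val (b t) <= N)%N])
     Qterm g l mu j y (aget b).
Proof.
move=> hNM; rewrite /Qsum (reindex_ffun (2 * g) N M (Qcond g l j) (Qterm g l mu j y) hNM).
rewrite (bigID (fun b : {ffun 'I_(2 * g) -> 'I_M.+1} => [forall t, (val (b t) <= N)%N])) /=.
by rewrite addrC addrK.
Qed.

Lemma Qsum_int p g l mu N j y : prime p -> (1 <= l <= g)%N -> (1 <= j)%N ->
  (forall c, pI p (binr mu c) /\ pI p (binr (mu - 1) c)) ->
  (forall i, (2 <= i <= (nn g).-1)%N -> pI p (y i)) -> pI p (Qsum g l mu N j y).
Proof.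
move=> pr hl hj hc hy; apply: pI_sum => // a _.
by apply: pI_mul => //; [apply: Qcoef_int | apply: Qmon_int].
Qed.

Lemma Qsum_trunc p g l mu N M j k y : prime p -> (1 <= l <= g)%N -> (1 <= j)%N ->
  (k + l <= N)%N -> (N <= M)%N ->
  (forall c, pI p (binr mu c) /\ pI p (binr (mu - 1) c)) ->
  (forall i, (2 <= i <= (nn g).-1)%N -> pI p (y i)) ->
  ((0 < k)%N -> forall i, (2 <= i <= (nn g).-1)%N -> Dk p 1 (y i)) ->
  Dk p k (Qsum g l mu M j y - Qsum g l mu N j y).
Proof.
move=> pr hl hj hkN hNM hc hy hy1.
rewrite Qsum_split //; apply: Dk_sum => // b /andP [hq hf].
rewrite /Qterm.
case: (posnP k) => hk.
  subst k; apply/Dk0; apply: pI_mul => //; [apply: Qcoef_int | apply: Qmon_int] => //.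
rewrite mulrC; apply: Dk_mulr => //; last exact: Qcoef_int.
move: hf; rewrite negb_forall => /existsP [t ht].
have hb := Qcond_bound _ _ _ _ hl hq (val t).+1.
rewrite aget_ord in hb.
apply: (Dk_le p (Eg g l (aget b))) => //.
  have : (1 <= (val t).+1 <= (nn g).-1)%N by rewrite /nn /=; have := ltn_ord t; lia.
  move/hb; lia.
by apply: Qmon_Dk => //; apply: hy1.
Qed.

Lemma Qsum_cong p k g l mu nu N j y z : prime p ->
  (forall b : {ffun 'I_(2 * g) -> 'I_N.+1}, Rk p k (Qcoef g mu j (aget b)) (Qcoef g nu j (aget b))) ->
  (forall a, Rk p k (Qmon g l j a y) (Qmon g l j a z)) ->
  Dk p k (Qsum g l mu N j y - Qsum g l nu N j z).
Proof.
move=> pr hc hm; rewrite /Qsum -sumrB; apply: Dk_sum => // b _.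
by case: (Rk_mul p k _ _ _ _ pr (hc b) (hm (aget b))).
Qed.

Lemma logn_lt p n : prime p -> (0 < n)%N -> (logn p n < n)%N.
Proof.
move=> pr hn; have := ltn_expl (logn p n) (prime_gt1 pr).
have := dvdn_leq hn (pfactor_dvdnn p n); lia.
Qed.

Theorem proposition10p4 (p g l : nat) :
  prime p -> odd p -> (1 <= g)%N -> (1 <= l <= g)%N -> (nn g < p)%N ->
  (* coefficients of Q^l = Q^l[-1/2] lie in Z_p *)
  (forall (j : nat) (a : nat -> nat), (1 <= j <= nn g)%N -> Qcond g l j a ->
      pint p (Qcoef g (- (1 / 2%:R)) j a)) /\
  exists F : nat -> (nat -> nat -> rat) -> nat -> rat,
    (forall x, in_D p (nn g) x -> forall j, (1 <= j <= nn g)%N -> is_zp p (F j x)) /\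
    (* partial sums (0 <= a_i <= N) of Q^l converge uniformly to F *)
    unif_conv p (nn g) (fun N j x => Qeval g l (- (1 / 2%:R)) N j x) F /\
    (* Q^{l,s} = Q^l[(p^s-1)/2] (0 <= a_i <= (p^s-1)/2) converge uniformly to F *)
    unif_conv p (nn g)
      (fun s j x => Qeval g l ((p ^ s).-1./2)%:R ((p ^ s).-1./2) j x) F.
Proof.
move=> pr po hg hl hp.
have hmh : forall c, pI p (binr mh c) /\ pI p (binr (mh - 1) c).
  by move=> c; apply: binr_mh_int.
have hp3 := p_ge3 p pr po.
split.
  by move=> j a hj _; apply/pintP; apply: Qcoef_int.
have xI : forall x, in_D p (nn g) x -> forall k i, (2 <= i <= (nn g).-1)%N -> pI p (x i k).
  move=> x hx k i hi; have [hz _] := hx i hi; have [h1 _] := hz k; exact/pintP.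
have x1 : forall x, in_D p (nn g) x -> forall k, (0 < k)%N ->
    forall i, (2 <= i <= (nn g).-1)%N -> Dk p 1 (x i k).
  move=> x hx k hk i hi; have [hz h0] := hx i hi; have [_ h1] := hz 1%N.
  have -> : x i k = (x i k - x i 1%N) + (x i 1%N - 0) by ring.
  by apply: Dk_add => //; apply/pdvdP; [apply: h1 | apply: h0].
have xk : forall x, in_D p (nn g) x -> forall k m, (k <= m)%N ->
    forall i, (2 <= i <= (nn g).-1)%N -> Rk p k (x i m) (x i k).
  move=> x hx k m hkm i hi; split; try exact: xI.
  have [hz _] := hx i hi; have [_ h1] := hz k; exact/pdvdP/h1.
exists (fun j x k => Qeval g l mh (k + l) j x k).
split.
  move=> x hx j /andP [hj1 hj2] k; split.
    by apply/pintP; apply: Qsum_int => // i hi; apply: xI.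
  move=> m hkm; apply/pdvdP; rewrite /Qeval.
  set A := Qsum _ _ _ _ _ _.
  set B := Qsum _ _ _ _ _ _.
  have -> : A - B = (A - Qsum g l mh (k + l) j (fun i => x i m)) +
                    (Qsum g l mh (k + l) j (fun i => x i m) - B) by ring.
  apply: Dk_add => //.
    apply: Qsum_trunc => //; first by rewrite leq_add2r.
      by move=> i hi; apply: xI.
    move=> hk i hi; apply: x1 => //; exact: leq_trans hkm.
  apply: Qsum_cong => //.
    by move=> b; apply: Rk_refl => //; apply: Qcoef_int.
  move=> a; apply: Qmon_cong => // i hi; exact: xk.
split.
  move=> k; exists (k + l)%N => N hN x hx j /andP [hj1 hj2].
  rewrite /zp_eqmod; apply/pdvdP; rewrite /Qeval.
  apply: Qsum_trunc => //; first by move=> i hi; apply: xI.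
  by move=> hk i hi; apply: x1.
move=> k; exists (k + (k + l)`! + (k + l) + 1)%N => s hs x hx j /andP [hj1 hj2].
rewrite /zp_eqmod; apply/pdvdP; rewrite /Qeval.
change (((p ^ s).-1./2)%:R : rat) with (mus p s).
have hs1 : (1 <= s)%N by lia.
have hNs : (k + l <= (p ^ s).-1./2)%N by have := s_le_N p s hp3; lia.
set A := Qsum _ _ _ _ _ _.
set B := Qsum _ _ _ _ _ _.
have -> : A - B = (A - Qsum g l (mus p s) (k + l) j (fun i => x i k)) +
                  (Qsum g l (mus p s) (k + l) j (fun i => x i k) - B) by ring.
apply: Dk_add => //.
  apply: Qsum_trunc => //.
  - by move=> c; apply: binr_mus_int.
  - by move=> i hi; apply: xI.
  - by move=> hk i hi; apply: x1.
apply: Qsum_cong => //.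
  move=> b; apply: (Qcoef_cong _ _ _ _ _ _ _ (k + l)) => //; last exact: aget_le.
  move=> c hc.
  have hv : (logn p c`! < (k + l)`!)%N.
    apply: leq_trans (logn_lt p _ pr (fact_gt0 c)) _; exact: leq_fact.
  have key : forall t, pI p t -> pI p (binr (mus p s - t) c) -> pI p (binr (mh - t) c) ->
      Rk p k (binr (mus p s - t) c) (binr (mh - t) c).
    move=> t ht h1 h2; split => //.
    apply: (Dk_le p (s - logn p c`!)) => //; first by lia.
    apply: binr_cong => //; try apply: pI_sub => //; try exact: pI_nat.
    - by apply: pI_opp => //; apply: pI_half.
    - exact: mus_Dk.
    - lia.
  have [m1 m2] := binr_mus_int p s c hp3 hs1 pr.
  have [h1 h2] := hmh c.
  split; last by apply: key => //; apply: pI1.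
  by have := key 0 (pI0 p pr); rewrite !subr0; apply.
move=> a; apply: Rk_refl => //; apply: Qmon_int => // i hi; exact: xI.
Qed.
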